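(* Let $\mathcal{X}$ be a finite set of $n$ items and let $\mathcal{D}=\{(x_j,C_j)\}_{j=1}^m$ be a dataset of choices, $x_j\in C_j\subseteq\mathcal{X}$, $|C_j|\ge 2$. The full-rank CDM on $\mathcal{X}$ is identifiable from $\mathcal{D}$ if and only if $\mathrm{rank}(G(\mathcal{D}))=n(n-1)-1$.
   Context: A (full-rank) CDM on $\mathcal{X}$ has parameter vector $u=(u_{xz})_{x\neq z}\in\mathbb{R}^{n(n-1)}$ and choice probabilities, for $C\subseteq\mathcal{X}$, $|C|\ge2$, $x\in C$, $P_u(x\mid C)=\dfrac{\exp\big(\sum_{z\in C\setminus\{x\}}u_{xz}\big)}{\sum_{y\in C}\exp\big(\sum_{z\in C\setminus\{y\}}u_{yz}\big)}$; these are invariant under adding a common constant to all entries of $u$. The CDM is identifiable from $\mathcal{D}$ if whenever $u,u'$ satisfy $P_u(x\mid C)=P_{u'}(x\mid C)$ for every distinct set $C$ among $C_1,\dots,C_m$ and every $x\in C$, then $u'-u=\alpha\mathbf{1}$ for some $\alpha\in\mathbb{R}$. For a set $C$ and $x\in C$, let $g_{x,C}\in\mathbb{Z}^{n(n-1)}$ be the integer vector with $g_{x,C}^{T}u=\sum_{y\in C\setminus\{x\}}\Big([u_{xy}-u_{yx}]+\sum_{z\in C\setminus\{x,y\}}[u_{xz}-u_{yz}]\Big)$ for all $u$. $G(\mathcal{D})$ is the integer matrix with one row $g_{x,C_j}^{T}$ for every datapoint $j$ and every item $x\in C_j$. *)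

(* Defs.v *)
From HB Require Import structures.
From mathcomp Require Import all_boot all_order all_algebra.
From mathcomp Require Import all_classical all_reals all_analysis.
Set Implicit Arguments. Unset Strict Implicit. Unset Printing Implicit Defensive.
Import Order.TTheory GRing.Theory Num.Theory.
Local Open Scope ring_scope.

(* Items: 'I_n.  Parameter coordinates: ordered pairs (x,z) with x <> z;
   there are n(n-1) of them. *)
Definition pairT (n : nat) := {p : 'I_n * 'I_n | p.1 != p.2}.
HB.instance Definition _ n := Finite.on (pairT n).

(* u_{ab} for a parameter vector u (0 on the diagonal, which never occurs
   in the formulas below with a = b). *)
Definition uent (R : pzRingType) n (u : pairT n -> R) (a b : 'I_n) : R :=
  \sum_(p : pairT n | val p == (a, b)) u p.

Definition cdm_score (R : pzRingType) n (u : pairT n -> R) (x : 'I_n)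
  (C : {set 'I_n}) : R :=
  \sum_(z in C | z != x) uent u x z.

Definition cdm_prob (R : realType) n (u : pairT n -> R) (x : 'I_n)
  (C : {set 'I_n}) : R :=
  expR (cdm_score u x C) / \sum_(y in C) expR (cdm_score u y C).

Definition cdm_identifiable (R : realType) n m (C : 'I_m -> {set 'I_n}) :=
  forall u u' : pairT n -> R,
    (forall j : 'I_m, forall y, y \in C j -> cdm_prob u y (C j) = cdm_prob u' y (C j)) ->
    exists alpha : R, forall p, u' p - u p = alpha.

(* the linear form u |-> g_{x,C}^T u *)
Definition gform (R : pzRingType) n (x : 'I_n) (C : {set 'I_n}) (u : pairT n -> R) : R :=
  \sum_(y in C | y != x)
    ((uent u x y - uent u y x)
     + \sum_(z in C | (z != x) && (z != y)) (uent u x z - uent u y z)).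

Definition gcoef n (x : 'I_n) (C : {set 'I_n}) (p : pairT n) : int :=
  gform x C (fun q : pairT n => (q == p)%:R).

(* rows of G(D): one per datapoint j and item x in C_j *)
Definition rowT n m (C : 'I_m -> {set 'I_n}) :=
  {jx : 'I_m * 'I_n | jx.2 \in C jx.1}.
HB.instance Definition _ n m (C : 'I_m -> {set 'I_n}) := Finite.on (rowT C).

Definition Gmat n m (C : 'I_m -> {set 'I_n}) : 'M[int]_(#|{: rowT C}|, #|{: pairT n}|) :=
  \matrix_(r, c) gcoef (val (enum_val r)).2 (C (val (enum_val r)).1) (enum_val c).

Definition Grank n m (C : 'I_m -> {set 'I_n}) : nat :=
  \rank (map_mx (fun z : int => z%:~R : rat) (Gmat C)).

(* Main.v *)
Require Import Defs.
From HB Require Import structures.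
From mathcomp Require Import all_boot all_order all_algebra.
From mathcomp Require Import all_classical all_reals all_analysis.
From mathcomp Require Import ring lra.
Set Implicit Arguments. Unset Strict Implicit. Unset Printing Implicit Defensive.
Import Order.TTheory GRing.Theory Num.Theory.
Local Open Scope ring_scope.

Section Lin.
Variables (R : comNzRingType) (n : nat).
Implicit Types (u v : pairT n -> R).

Lemma uentD u v a b : uent (fun q => u q + v q) a b = uent u a b + uent v a b.
Proof. by rewrite /uent big_split. Qed.

Lemma uentZ k u a b : uent (fun q => k * u q) a b = k * uent u a b.
Proof. by rewrite /uent mulr_sumr. Qed.

Lemma uent0 a b : uent (fun _ : pairT n => (0:R)) a b = 0.
Proof. by rewrite /uent big1. Qed.

Lemma uent_const (c : R) (a b : 'I_n) : a != b -> uent (fun _ : pairT n => c) a b = c.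
Proof.
move=> ab; rewrite /uent (big_pred1 (exist _ (a, b) ab : pairT n)) //.
Qed.

Lemma gformD x C u v : gform x C (fun q => u q + v q) = gform x C u + gform x C v.
Proof.
rewrite /gform -big_split; apply: eq_bigr => y _ /=.
rewrite !uentD.
rewrite (eq_bigr (fun z => (uent u x z - uent u y z) + (uent v x z - uent v y z))); last first.
  by move=> z _; rewrite !uentD; ring.
rewrite big_split /=; ring.
Qed.

Lemma gformZ x C k u : gform x C (fun q => k * u q) = k * gform x C u.
Proof.
rewrite /gform mulr_sumr; apply: eq_bigr => y _ /=.
rewrite !uentZ.
rewrite (eq_bigr (fun z => k * (uent u x z - uent u y z))); last first.
  by move=> z _; rewrite !uentZ; ring.
rewrite -mulr_sumr. ring.
Qed.

Lemma gform0 x C : gform x C (fun _ : pairT n => (0:R)) = 0.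
Proof.
rewrite /gform big1 // => y _; rewrite !uent0 big1 ?subr0 ?addr0 // => z _.
by rewrite !uent0 subr0.
Qed.

Lemma gform_const x C (c : R) : gform x C (fun _ : pairT n => c) = 0.
Proof.
rewrite /gform big1 // => y /andP[_ yx].
have xy : x != y by rewrite eq_sym.
rewrite (uent_const c xy) (uent_const c yx) subrr add0r big1 // => z /andP[_ /andP[zx zy]].
have xz : x != z by rewrite eq_sym.
have yz : y != z by rewrite eq_sym.
by rewrite (uent_const c xz) (uent_const c yz) subrr.
Qed.

Lemma gform_ext x C u v : u =1 v -> gform x C u = gform x C v.
Proof. by move=> /funext ->. Qed.

Lemma gform_sum x C (I : finType) (F : I -> pairT n -> R) :
  gform x C (fun q => \sum_i F i q) = \sum_i gform x C (F i).
Proof.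
elim: (index_enum I) => [|i s IH].
  rewrite big_nil (@gform_ext _ _ _ (fun _ => 0)) ?gform0 // => q; by rewrite big_nil.
rewrite big_cons -IH -gformD; apply: gform_ext => q; by rewrite big_cons.
Qed.

Lemma gform_decomp x C u :
  gform x C u = \sum_p u p * gform x C (fun q => (q == p)%:R).
Proof.
transitivity (gform x C (fun q => \sum_p u p * (q == p)%:R)).
  apply: gform_ext => q; rewrite (bigD1 q) //= eqxx mulr1 big1 ?addr0 //.
  by move=> p /negbTE; rewrite eq_sym => ->; rewrite mulr0.
rewrite gform_sum; apply: eq_bigr => p _.
exact: (gformZ x C (u p) (fun q => (q == p)%:R)).
Qed.

End Lin.

Lemma gform_morph (R S : comNzRingType) (f : {rmorphism R -> S}) n x C (u : pairT n -> R) :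
  f (gform x C u) = gform x C (fun q => f (u q)).
Proof.
rewrite /gform rmorph_sum; apply: eq_bigr => y _.
rewrite rmorphD rmorphB rmorph_sum /uent !rmorph_sum; congr (_ - _ + _).
apply: eq_bigr => z _; by rewrite rmorphB !rmorph_sum.
Qed.

Lemma gform_coef (R : comNzRingType) n x C (u : pairT n -> R) :
  gform x C u = \sum_p u p * (gcoef x C p)%:~R.
Proof.
rewrite gform_decomp; apply: eq_bigr => p _; congr (_ * _).
rewrite /gcoef (@gform_morph _ _ intr).
by apply: gform_ext => q /=; rewrite rmorph_nat.
Qed.

Section Score.
Variables (R : comNzRingType) (n : nat).
Implicit Types (u v : pairT n -> R) (C : {set 'I_n}) (x y : 'I_n).

Lemma score_diff u C x y : x \in C -> y \in C -> x != y ->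
  cdm_score u x C - cdm_score u y C =
  (uent u x y - uent u y x) + \sum_(z in C | (z != x) && (z != y)) (uent u x z - uent u y z).
Proof.
move=> xC yC xy.
rewrite /cdm_score (bigD1 y) /=; last by rewrite yC eq_sym xy.
rewrite [X in _ - X](bigD1 x) /=; last by rewrite xC xy.
have E1 : \sum_(i | (i \in C) && (i != x) && (i != y)) uent u x i =
   \sum_(i in C | (i != x) && (i != y)) uent u x i by apply: eq_bigl => i; rewrite andbA.
have E2 : \sum_(i | (i \in C) && (i != y) && (i != x)) uent u y i =
   \sum_(i in C | (i != x) && (i != y)) uent u y i.
  by apply: eq_bigl => i; rewrite -andbA [(i != y) && _]andbC.
rewrite E1 E2 sumrB; ring.
Qed.

Lemma gform_score u C x : x \in C ->
  gform x C u = \sum_(y in C | y != x) (cdm_score u x C - cdm_score u y C).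
Proof.
move=> xC; rewrite /gform; apply: eq_bigr => y /andP[yC yx].
by rewrite score_diff // eq_sym.
Qed.

Lemma scoreB u u' x C :
  cdm_score (fun q => u' q - u q) x C = cdm_score u' x C - cdm_score u x C.
Proof. by rewrite /cdm_score -sumrB; apply: eq_bigr => z _; rewrite /uent -sumrB. Qed.

Lemma score0 x C : cdm_score (fun _ : pairT n => (0:R)) x C = 0.
Proof. by rewrite /cdm_score big1 // => z _; rewrite uent0. Qed.

Lemma gform_score_sum x C u : x \in C ->
  gform x C u = cdm_score u x C *+ #|C| - \sum_(y in C) cdm_score u y C.
Proof.
move=> xC; rewrite gform_score //.
have <- : \sum_(y in C) (cdm_score u x C - cdm_score u y C) =
   cdm_score u x C *+ #|C| - \sum_(y in C) cdm_score u y C by rewrite sumrB sumr_const.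
by rewrite [RHS](bigD1 x) //= subrr add0r.
Qed.
End Score.

Section Prob.
Variables (R : realType) (n : nat).
Implicit Types (u v : pairT n -> R) (C : {set 'I_n}) (x y : 'I_n).

Lemma const_scores u C : (forall y, y \in C -> gform y C u = 0) ->
  forall x y, x \in C -> y \in C -> cdm_score u x C = cdm_score u y C.
Proof.
move=> H x y xC yC.
have h z : z \in C -> cdm_score u z C *+ #|C| = \sum_(y in C) cdm_score u y C.
  by move=> zC; have := H z zC; rewrite (gform_score_sum u zC) => /eqP; rewrite subr_eq0 => /eqP.
have : cdm_score u x C *+ #|C| = cdm_score u y C *+ #|C| by rewrite !h.
move=> e; apply/eqP; rewrite -subr_eq0.
have /eqP : (cdm_score u x C - cdm_score u y C) *+ #|C| = 0 by rewrite mulrnBl e subrr.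
have c0 : (0 < #|C|)%N by apply/card_gt0P; exists x.
by rewrite mulrn_eq0 eqn0Ngt c0.
Qed.

Lemma Z_gt0 u C x : x \in C -> 0 < \sum_(y in C) expR (cdm_score u y C).
Proof.
move=> xC; rewrite (bigD1 x) //=.
have := expR_gt0 (cdm_score u x C).
have : 0 <= \sum_(i in C | i != x) expR (cdm_score u i C).
  by apply: sumr_ge0 => i _; exact: expR_ge0.
Timeout 20 lra.
Qed.

Lemma prob_scores u u' C :
  (forall y, y \in C -> cdm_prob u y C = cdm_prob u' y C) ->
  forall x y, x \in C -> y \in C ->
  cdm_score u' x C - cdm_score u x C = cdm_score u' y C - cdm_score u y C.
Proof.
move=> H x y xC yC.
have Z0 : \sum_(y in C) expR (cdm_score u y C) != 0 by rewrite gt_eqF // (Z_gt0 u xC).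
have Z'0 : \sum_(y in C) expR (cdm_score u' y C) != 0 by rewrite gt_eqF // (Z_gt0 u' xC).
have key z : z \in C -> expR (cdm_score u' z C - cdm_score u z C) =
   (\sum_(y in C) expR (cdm_score u' y C)) / (\sum_(y in C) expR (cdm_score u y C)).
  move=> zC; have := H z zC; rewrite /cdm_prob => e.
  have ez : expR (cdm_score u z C) != 0 by rewrite gt_eqF // expR_gt0.
  rewrite expRB.
  rewrite (_ : expR (cdm_score u' z C) = expR (cdm_score u z C) /
       (\sum_(y in C) expR (cdm_score u y C)) * (\sum_(y in C) expR (cdm_score u' y C))).
    by field; rewrite ?Z0 ?Z'0 ?ez.
  by rewrite e; field; rewrite ?Z0 ?Z'0 ?ez.
by apply: expR_inj; rewrite !key.
Qed.

Lemma scores_prob u u' C :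
  (forall x y, x \in C -> y \in C ->
  cdm_score u' x C - cdm_score u x C = cdm_score u' y C - cdm_score u y C) ->
  forall y, y \in C -> cdm_prob u y C = cdm_prob u' y C.
Proof.
move=> H y yC; set k := cdm_score u' y C - cdm_score u y C.
have E z : z \in C -> expR (cdm_score u' z C) = expR (cdm_score u z C) * expR k.
  by move=> zC; rewrite -expRD /k -(H z y zC yC); congr expR; ring.
have Z0 : \sum_(y in C) expR (cdm_score u y C) != 0 by rewrite gt_eqF // (Z_gt0 u yC).
have k0 : expR k != 0 by rewrite gt_eqF // expR_gt0.
rewrite /cdm_prob [X in _ = _ / X](eq_bigr (fun z => expR (cdm_score u z C) * expR k)); last first.
  by move=> z zC; exact: E.
by rewrite -mulr_suml E //; field; rewrite k0 Z0.
Qed.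
End Prob.

Lemma card_pairT n : #|{: pairT n}| = (n * (n - 1))%N.
Proof.
rewrite card_sig -sum1_card.
transitivity (\sum_(i < n) \sum_(j < n) (i != j : nat))%N.
  rewrite pair_big /= big_mkcond /=; apply: eq_bigr => [[i j]] _ /=.
  by rewrite !inE /=; case: (i != j).
rewrite (eq_bigr (fun _ => n.-1)).
  by rewrite sum_nat_const card_ord subn1.
move=> i _; rewrite (eq_bigr (fun j => if j != i then 1 else 0)%N); last by move=> j _; rewrite eq_sym.
by rewrite -big_mkcond sum1_card cardC1 card_ord.
Qed.

Section Mat.
Variables (R : realType) (n m : nat) (C : 'I_m -> {set 'I_n}).
Local Notation N := #|{: pairT n}|.
Definition GR : 'M[R]_(#|{: rowT C}|, N) := map_mx (fun z : int => z%:~R) (Gmat C).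

Lemma Grank_GR : Grank C = \rank GR.
Proof.
rewrite /Grank -(mxrank_map (ratr : {rmorphism rat -> R})); congr (\rank _).
by apply/matrixP => i j; rewrite !mxE; exact: ratr_int.
Qed.

Definition funv (v : 'rV[R]_N) : pairT n -> R := fun p => v 0 (enum_rank p).

Lemma mulGT_entry (v : 'rV[R]_N) (r : 'I_#|{: rowT C}|) : (v *m GR^T) 0 r =
   \sum_c v 0 c * (gcoef (val (enum_val r)).2 (C (val (enum_val r)).1) (enum_val c))%:~R.
Proof.
rewrite mxE; apply: eq_bigr => c _; by rewrite !mxE.
Qed.

Lemma mulGT_gform (v : 'rV[R]_N) (r : 'I_#|{: rowT C}|) : (v *m GR^T) 0 r =
   gform (val (enum_val r)).2 (C (val (enum_val r)).1) (funv v).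
Proof.
rewrite mulGT_entry gform_coef.
rewrite [RHS](reindex (fun c : 'I_N => enum_val c)) /=; last first.
  by apply: onW_bij; exact: enum_val_bij.
by apply: eq_bigr => c _; rewrite /funv enum_valK.
Qed.

Lemma kerP (v : 'rV[R]_N) : (v <= kermx GR^T)%MS <->
  (forall j y, y \in C j -> gform y (C j) (funv v) = 0).
Proof.
rewrite sub_kermx; split.
  move/eqP => H j y yC.
  have [r hr] : exists r : 'I_#|{: rowT C}|, enum_val r = (exist _ (j, y) yC : rowT C).
    by exists (enum_rank (exist _ (j, y) yC : rowT C)); rewrite enum_rankK.
  move/matrixP: H => /(_ 0 r); by rewrite mulGT_gform hr mxE.
move=> H; apply/eqP/matrixP => i r; rewrite ord1 mulGT_gform mxE.
case: (enum_val r) => [[j y] yC] /=; exact: H.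
Qed.
End Mat.


Lemma ident_K (R : realType) n m (C : 'I_m -> {set 'I_n}) :
  cdm_identifiable R C <-> (forall u : pairT n -> R,
    (forall j y, y \in C j -> gform y (C j) u = 0) -> exists a, forall p, u p = a).
Proof.
split.
  move=> I u Ku.
  have P0 : forall j y, y \in C j -> cdm_prob (fun _ => 0) y (C j) = cdm_prob u y (C j).
    move=> j; apply: scores_prob => x y xC yC.
    rewrite !score0 !subr0; exact: (const_scores (Ku j)).
  have [a ha] := I (fun _ => 0) u P0.
  by exists a => p; rewrite -(ha p) subr0.
move=> H u u' E; apply: H => j y yC.
rewrite gform_score // big1 // => z /andP[zC _].
by rewrite !scoreB (prob_scores (E j) yC zC) subrr.
Qed.

From mathcomp Require Import zify.
Local Close Scope ring_scope.

Theorem theorem4 (R : realType) (n m : nat) (x : 'I_m -> 'I_n)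
  (C : 'I_m -> {set 'I_n})
  (hx : forall j, x j \in C j) (hC : forall j, 2 <= #|C j|) :
  cdm_identifiable R C <-> Grank C = (n * (n - 1) - 1)%N.
Proof.
rewrite ident_K (Grank_GR R).
pose one := const_mx 1%R : 'rV[R]_#|{: pairT n}|.
have oneK : (one <= kermx (GR R C)^T)%MS.
  apply/kerP => j y yC; rewrite (@gform_ext _ _ _ _ _ (fun _ => 1%R)) ?gform_const // => p.
  by rewrite /funv mxE.
have step1 : (forall u : pairT n -> R,
    (forall j y, y \in C j -> gform y (C j) u = 0%R) -> exists a, forall p, u p = a)
   <-> (kermx (GR R C)^T <= one)%MS.
  split.
    move=> H; apply/rV_subP => v /kerP/H [a ha]; apply/sub_rVP; exists a.
    apply/rowP => i; rewrite !mxE mulr1.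
    by have := ha (enum_val i); rewrite /funv enum_valK.
  move=> H u Ku.
  pose v := (\row_c u (enum_val c))%R : 'rV[R]_#|{: pairT n}|.
  have fv : funv v =1 u by move=> p; rewrite /funv mxE enum_rankK.
  have vK : (v <= kermx (GR R C)^T)%MS.
    by apply/kerP => j y yC; rewrite (gform_ext _ _ fv); exact: Ku.
  have /sub_rVP [a ha] := submx_trans vK H.
  by exists a => p; rewrite -(fv p) /funv ha !mxE mulr1.
rewrite step1 -(mxrank_leqif_sup oneK).2 mxrank_ker mxrank_tr rank_rV.
have one0 : (one != 0%R) = (0 < #|{: pairT n}|)%N.
  case: (posnP #|{: pairT n}|) => h.
    apply/negbTE/negPn/eqP/matrixP => i j; exfalso.
    by have := ltn_ord j; rewrite {2}h.
  apply/negP => /eqP/matrixP/(_ ord0 (Ordinal h)); rewrite !mxE.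
  by apply/eqP; exact: oner_neq0.
have rle : (\rank (GR R C) <= #|{: pairT n}|)%N by exact: rank_leq_col.
rewrite one0; move: rle; move: (\rank (GR R C)) => r; rewrite card_pairT => rle.
case: (posnP (n * (n - 1))) => h; rewrite ?h /=.
  split; [move=> _ | move=> _; apply/eqP]; lia.
split; [move/eqP | move=> e; apply/eqP]; lia.
Qed.
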